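(* Let $\alpha\in\mathbb{Q}(i)\setminus\mathbb{R}$ with $|\alpha|>1$, let $P_\alpha(X)=a_2X^2+a_1X+a_0$ with $a_0,a_1,a_2\in\mathbb{Z}$ coprime, $a_2>0$ and $P_\alpha(\alpha)=0$, let $\mathcal{D}=\{0,1,\ldots,|a_0|-1\}$, and let $\Lambda_\alpha=\mathbb{Z}[\alpha]\cap\alpha^{-1}\mathbb{Z}[\alpha^{-1}]$. Then for every $x\in\Lambda_\alpha$ there is a unique $d\in\mathcal{D}$ such that $\frac{x-d}{\alpha}\in\Lambda_\alpha$; consequently the backward division map $T_\alpha:\Lambda_\alpha\to\Lambda_\alpha$, $x\mapsto \frac{x-d}{\alpha}$ with this $d$, is well defined.
   Context: It is known that $\Lambda_\alpha=a_2\mathbb{Z}+(a_2\alpha+a_1)\mathbb{Z}$ is a lattice in $\mathbb{C}$. *)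

(* Defs.v *)
(* complex numbers are modelled by algC (algebraic complex numbers),
   which contains Q(i). *)
From HB Require Import structures.
From mathcomp Require Import all_boot all_order all_algebra all_field.
Set Implicit Arguments. Unset Strict Implicit. Unset Printing Implicit Defensive.
Import Order.TTheory GRing.Theory Num.Theory.
Local Open Scope ring_scope.

Definition inZpoly (a x : algC) : Prop :=
  exists p : {poly int}, x = (map_poly (intr : int -> algC) p).[a].

Definition inInvPart (a x : algC) : Prop :=
  exists p : {poly int}, x = a^-1 * (map_poly (intr : int -> algC) p).[a^-1].

Definition inLambda (a x : algC) : Prop := inZpoly a x /\ inInvPart a x.

(* Main.v *)
Require Import Defs.
From HB Require Import structures.
From mathcomp Require Import all_boot all_order all_algebra all_field.
From mathcomp Require Import ring zify.
Import Order.TTheory GRing.Theory Num.Theory.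
Local Open Scope ring_scope.

Definition ev (a : algC) (p : {poly int}) := (map_poly (intr : int -> algC) p).[a].
Lemma evM a p q : ev a (p * q) = ev a p * ev a q.
Proof. by rewrite /ev rmorphM hornerM. Qed.
Lemma evD a p q : ev a (p + q) = ev a p + ev a q.
Proof. by rewrite /ev rmorphD hornerD. Qed.
Lemma evB a p q : ev a (p - q) = ev a p - ev a q.
Proof. by rewrite /ev rmorphB hornerD hornerN. Qed.
Lemma evC a c : ev a c%:P = c%:~R.
Proof. by rewrite /ev map_polyC hornerC. Qed.
Lemma evX a : ev a 'X = a.
Proof. by rewrite /ev map_polyX hornerX. Qed.
Lemma evXn a n : ev a 'X^n = a ^+ n.
Proof. by rewrite /ev map_polyXn hornerXn. Qed.

Lemma size2E (r : {poly int}) : (size r <= 2)%N -> r = (r`_0)%:P + (r`_1)%:P * 'X.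
Proof.
move=> hs; apply/polyP => i; rewrite coefD coefC coefCM coefX.
case: i => [|[|i]] /=; rewrite ?mulr0 ?mulr1 ?addr0 ?add0r //.
by rewrite nth_default // (leq_trans hs).
Qed.

Lemma small_root (a : algC) (r : {poly int}) :
  a \isn't Num.real -> (size r <= 2)%N -> ev a r = 0 -> r = 0.
Proof.
move=> nr hs; rewrite (size2E _ hs) evD evM evC evC evX => h.
have r1 : r`_1 = 0.
  apply/eqP; apply/negPn/negP => nz.
  have nz' : (r`_1)%:~R != 0 :> algC by rewrite intr_eq0.
  have : a = - (r`_0)%:~R / (r`_1)%:~R.
    by apply: (mulIf nz'); rewrite mulrC -mulrA mulVf // mulr1; apply/eqP; rewrite -addr_eq0 addrC h.
  move=> ea; move: nr; rewrite ea.
  by rewrite rpredM ?rpredV ?rpredN ?realz.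
move: h; rewrite r1 mul0r addr0 => /eqP; rewrite intr_eq0 => /eqP r0.
by move: (size2E _ hs); rewrite r0 r1 mul0r addr0.
Qed.

Definition fpol (a0 a1 a2 : int) : {poly int} := Poly [:: a0; a1; a2].

Lemma fpolE a0 a1 a2 : fpol a0 a1 a2 = a0%:P + a1%:P * 'X + a2%:P * 'X^2.
Proof.
apply/polyP => i; rewrite coef_Poly !coefD coefC !coefCM coefX coefXn.
by case: i => [|[|[|i]]] /=; rewrite ?mulr0 ?mulr1 ?addr0 ?add0r // nth_nil.
Qed.

Lemma fpol_seq a0 a1 a2 : a2 != 0 -> fpol a0 a1 a2 = [:: a0; a1; a2] :> seq int.
Proof. by move=> h; rewrite /fpol (PolyK (c:=0)) //=. Qed.

Lemma fpol_prim a0 a1 a2 : 0 < a2 -> gcdz (gcdz a0 a1) a2 = 1 ->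
  zprimitive (fpol a0 a1 a2) = fpol a0 a1 a2.
Proof.
move=> h2 hg.
have nz2 : a2 != 0 by rewrite gt_eqF.
have hc : zcontents (fpol a0 a1 a2) = 1.
  rewrite /zcontents lead_coefE fpol_seq //= gtr0_sgz // mul1r.
  rewrite !big_ord_recl big_ord0 /=.
  move: hg; rewrite /gcdz /= gcdn0 gcdnA => ->. done.
by rewrite [RHS]zpolyEprim hc scale1r.
Qed.

Lemma ev_fpol a a0 a1 a2 : ev a (fpol a0 a1 a2) = a2%:~R * a ^+ 2 + a1%:~R * a + a0%:~R.
Proof. by rewrite fpolE !evD !evM !evC !evX; ring. Qed.

Lemma f_dvd (a : algC) a0 a1 a2 (R : {poly int}) : a \isn't Num.real -> 0 < a2 ->
  ev a (fpol a0 a1 a2) = 0 -> ev a R = 0 -> fpol a0 a1 a2 %| R.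
Proof.
move=> nr h2 hf hR.
have nz2 : a2 != 0 by rewrite gt_eqF.
have sf : size (fpol a0 a1 a2) = 3%N by rewrite fpol_seq.
have fnz : fpol a0 a1 a2 != 0 by rewrite -size_poly_eq0 sf.
rewrite /dvdp; apply/eqP; apply: (small_root a _ nr).
  by have := ltn_modpN0 R fnz; rewrite sf.
have := Pdiv.Idomain.divp_eq R (fpol a0 a1 a2).
move/(congr1 (fun p => p - (R %/ fpol a0 a1 a2) * fpol a0 a1 a2)).
rewrite [X in _ = X]addrC addKr => <-.
by rewrite evB -mul_polyC !evM hR hf !mulr0 subr0.
Qed.

Lemma ev_sum a (p : {poly int}) n : (size p <= n)%N -> ev a p = \sum_(i < n) (p`_i)%:~R * a ^+ i.
Proof.
move=> h; rewrite /ev (horner_coef_wide (n:=n)).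
  by apply: eq_bigr => i _; rewrite coef_map.
by rewrite size_map_inj_poly //; exact: intr_inj.
Qed.

Lemma size_lin (c0 c1 : int) : (size (c0%:P + c1%:P * 'X)%R <= 2)%N.
Proof.
apply: leq_trans (size_polyD _ _) _; rewrite geq_max; apply/andP; split.
  by apply: leq_trans (size_polyC_leq1 _) _.
by rewrite mul_polyC; apply: leq_trans (size_scale_leq _ _) _; rewrite size_polyX.
Qed.

Lemma rev_part (a x : algC) (q : {poly int}) : a != 0 ->
  x = a^-1 * (map_poly (intr : int -> algC) q).[a^-1] ->
  ev a (\poly_(i < (size q).+2) q`_((size q).+2 - i.+1)) = a ^+ (size q).+2 * x.
Proof.
move=> a0 ->; set m := (size q).+2.
rewrite (ev_sum _ _ m) ?size_poly //.
rewrite (horner_coef_wide (n:=m)); last first.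
  by rewrite size_map_inj_poly //; [ rewrite /m; apply: leq_trans (leqnSn _) (leqnSn _) | exact: intr_inj].
rewrite mulr_sumr mulr_sumr (reindex_inj rev_ord_inj) /=.
apply: eq_bigr => i _.
rewrite coef_poly /= coef_map /=.
have -> : (m - i.+1 < m)%N by rewrite ltn_subrL.
have hi : (m - (m - i.+1).+1)%N = i.
  by have := ltn_ord i; lia.
rewrite hi.
have em : a ^+ m = a ^+ (m - i.+1) * a ^+ i.+1 by rewrite -exprD subnK.
rewrite em exprVn exprS.
have bnz : a ^+ i != 0 by rewrite expf_neq0.
move: bnz; move: (a ^+ (m - i.+1)) (a ^+ i) ((q`_i)%:~R : algC) => A B c bnz.
by field; rewrite a0 bnz.
Qed.

Lemma key (a x : algC) (a0 a1 a2 : int) : a \isn't Num.real -> 0 < a2 ->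
  gcdz (gcdz a0 a1) a2 = 1 -> ev a (fpol a0 a1 a2) = 0 -> inLambda a x ->
  exists u v : int, x = u%:~R * a2%:~R + v%:~R * (a2%:~R * a + a1%:~R).
Proof.
move=> nr h2 hgcd hf [[p hp] [q hq]].
have hp' : x = ev a p := hp.
have anz : a != 0 by apply: contraNneq nr => ->; rewrite real0.
have nz2 : a2 != 0 by rewrite gt_eqF.
have sf : size (fpol a0 a1 a2) = 3%N by rewrite fpol_seq.
set n := size q.
set Q := \poly_(i < n.+2) q`_(n.+2 - i.+1).
have hQ : ev a Q = a ^+ n.+2 * x by exact: rev_part.
have hR0 : ev a ('X^n * 'X^2 * p - Q) = 0.
  by rewrite evB evM evM !evXn hQ -hp' -exprD addn2 subrr.
have [g hg] := dvdpP_int (f_dvd _ _ _ _ _ nr h2 hf hR0).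
rewrite fpol_prim // in hg.
set g0 := take_poly n g.
set t := take_poly 2 (drop_poly n g).
set g2 := drop_poly 2 (drop_poly n g).
have eg : g = g0 + (t + g2 * 'X^2) * 'X^n by rewrite /t /g2 poly_take_drop poly_take_drop.
have [t0 [t1 ht]] : exists t0 t1 : int, t = t0%:P + t1%:P * 'X.
  by exists t`_0, t`_1; apply: size2E; exact: size_take_poly.
pose L : {poly int} := (a2 * t0 + a1 * t1)%:P + (a2 * t1)%:P * 'X.
pose low : {poly int} := (a0 * t0)%:P + (a1 * t0 + a0 * t1)%:P * 'X.
pose h := p - fpol a0 a1 a2 * g2 - L.
have eq1 : h * ('X^n * 'X^2) = Q + fpol a0 a1 a2 * g0 + 'X^n * low.
  have -> : h * ('X^n * 'X^2) = ('X^n * 'X^2 * p - Q) + Q - 'X^n * 'X^2 * (fpol a0 a1 a2 * g2) - 'X^n * 'X^2 * L.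
    by rewrite /h; ring.
  rewrite hg eg ht /L /low fpolE; ring.
have h0 : h = 0.
  apply/eqP; apply/negPn/negP => hnz.
  have : (size (h * ('X^n * 'X^2))%R <= n.+2)%N.
    rewrite eq1; apply: leq_trans (size_polyD _ _) _; rewrite geq_max; apply/andP; split.
      apply: leq_trans (size_polyD _ _) _; rewrite geq_max; apply/andP; split.
        exact: size_poly.
      apply: leq_trans (size_polyMleq _ _) _; rewrite sf.
      by have := size_take_poly n g; rewrite -/g0 addSn /= add2n !ltnS.
    apply: leq_trans (size_polyMleq _ _) _; rewrite size_polyXn.
    have := size_lin (a0 * t0) (a1 * t0 + a0 * t1); by rewrite -/low addSn /= -(addn2 n) leq_add2l.
  rewrite -exprD size_mulXn //; move: hnz; rewrite -size_poly_eq0.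
  lia.
exists t0, t1.
have ep : p = fpol a0 a1 a2 * g2 + L by apply/eqP; rewrite -subr_eq0 opprD addrA -/h h0.
rewrite hp' ep evD evM hf mul0r add0r /L evD evM !evC evX !rmorphD !rmorphM /=.
ring.
Qed.

Lemma in_lambda (a : algC) (a0 a1 a2 u v : int) : a != 0 ->
  a2%:~R * a ^+ 2 + a1%:~R * a + a0%:~R = 0 ->
  inLambda a (u%:~R * a2%:~R + v%:~R * (a2%:~R * a + a1%:~R)).
Proof.
move=> anz hr.
have e0 : a0%:~R = -(a2%:~R * a ^+ 2 + a1%:~R * a) :> algC.
  by apply/eqP; rewrite -addr_eq0 addrC hr.
split.
  exists ((u * a2 + v * a1)%:P + (v * a2)%:P * 'X).
  rewrite -/(ev a _); rewrite evD evM !evC evX !rmorphD !rmorphM /=; ring.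
exists ((- (u * a1) - v * a0)%:P + (- (u * a0))%:P * 'X).
rewrite -/(ev a^-1 _); rewrite evD evM !evC evX !rmorphD !rmorphN !rmorphM /=.
rewrite e0; field; exact: anz.
Qed.

Lemma uniq_d (d d' : nat) (V a0 : int) : a0 != 0 -> (d < `|a0|)%N -> (d' < `|a0|)%N ->
  d'%:Z - d%:Z + V * a0 = 0 -> d' = d.
Proof.
move=> h h1 h2 e.
case: (ltrgtP V 0) => hV; last by move: e; rewrite hV mul0r addr0; lia.
- case: (ltrgtP a0 0) => ha; nia.
- case: (ltrgtP a0 0) => ha; nia.
Qed.

Theorem mainTheorem3 (alpha : algC) (r s : rat) (a0 a1 a2 : int) :
  alpha = ratr r + ratr s * 'i ->
  alpha \isn't Num.real ->
  1 < `|alpha| ->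
  gcdz (gcdz a0 a1) a2 = 1 ->
  0 < a2 ->
  a2%:~R * alpha ^+ 2 + a1%:~R * alpha + a0%:~R = 0 ->
  forall x : algC, inLambda alpha x ->
    exists! d : nat, (d < `|a0|)%N /\ inLambda alpha ((x - d%:R) / alpha).
Proof.
move=> _ nr _ hg h2 hr x hx.
have hf : ev alpha (fpol a0 a1 a2) = 0 by rewrite ev_fpol.
have anz : alpha != 0 by apply: contraNneq nr => ->; rewrite real0.
have nz2 : a2 != 0 by rewrite gt_eqF.
have nz2' : a2%:~R != 0 :> algC by rewrite intr_eq0.
have a0nz : a0 != 0.
  apply: contraNneq nr => e; move: hr; rewrite e mulr0z addr0 => hr.
  have : alpha = - a1%:~R / a2%:~R.
    apply: (mulIf nz2'); rewrite mulrC -mulrA mulVf // mulr1.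
    apply/eqP; rewrite -addr_eq0; apply/eqP.
    apply: (mulIf anz); rewrite mul0r -hr; ring.
  by move=> ->; rewrite rpredM ?rpredV ?rpredN ?realz.
have e0 : a0%:~R = -(a2%:~R * alpha ^+ 2 + a1%:~R * alpha) :> algC.
  by apply/eqP; rewrite -addr_eq0 addrC hr.
have uniq : forall d1 d2 : nat, (d1 < `|a0|)%N -> inLambda alpha ((x - d1%:R) / alpha) ->
    (d2 < `|a0|)%N -> inLambda alpha ((x - d2%:R) / alpha) -> d2 = d1.
  move=> d1 d2 hd1 hl1 hd2 hl2.
  have [u1 [v1 e1]] := key _ _ _ _ _ nr h2 hg hf hl1.
  have [u2 [v2 e2]] := key _ _ _ _ _ nr h2 hg hf hl2.
  have f1 : x = d1%:R + alpha * (u1%:~R * a2%:~R + v1%:~R * (a2%:~R * alpha + a1%:~R)).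
    by rewrite -e1; field.
  have f2 : x = d2%:R + alpha * (u2%:~R * a2%:~R + v2%:~R * (a2%:~R * alpha + a1%:~R)).
    by rewrite -e2; field.
  have hc : (d2%:R - d1%:R + v1%:~R * a0%:~R - v2%:~R * a0%:~R : algC)
      - (u1%:~R - u2%:~R) * a2%:~R * alpha = 0.
    have -> : (d2%:R - d1%:R + v1%:~R * a0%:~R - v2%:~R * a0%:~R : algC)
      - (u1%:~R - u2%:~R) * a2%:~R * alpha =
      (d2%:R + alpha * (u2%:~R * a2%:~R + v2%:~R * (a2%:~R * alpha + a1%:~R)))
      - (d1%:R + alpha * (u1%:~R * a2%:~R + v1%:~R * (a2%:~R * alpha + a1%:~R))).
      by rewrite e0; ring.
    by rewrite -f1 -f2 subrr.
  have hw : (u1 - u2) * a2 = 0.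
    apply/eqP; apply/negPn/negP => hw.
    have hw' : ((u1 - u2) * a2)%:~R != 0 :> algC by rewrite intr_eq0.
    move: nr; rewrite (_ : alpha = (d2%:R - d1%:R + v1%:~R * a0%:~R - v2%:~R * a0%:~R) / ((u1 - u2) * a2)%:~R).
      by move/negP; apply; rewrite !(rpredM, rpredV, rpredB, rpredD, realz, realn).
    apply: (mulIf hw'); rewrite mulrC -mulrA mulVf // mulr1.
    apply/eqP; rewrite eq_sym -subr_eq0; apply/eqP; rewrite -[RHS]hc rmorphM rmorphB /=; ring.
  apply: (uniq_d d1 d2 (v1 - v2) a0 a0nz hd1 hd2).
  have hw2 : (u1%:~R - u2%:~R) * a2%:~R = 0 :> algC by rewrite -rmorphB -rmorphM hw.
  rewrite hw2 mul0r subr0 in hc.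
  have cz : forall n : nat, ((n%:Z)%:~R : algC) = n%:R by [].
  apply/eqP; rewrite -(intr_eq0 algC) rmorphD rmorphB rmorphM rmorphB /= !cz; apply/eqP.
  by rewrite -[RHS]hc; ring.
have [u [v hx']] := key _ _ _ _ _ nr h2 hg hf hx.
pose N := u * a2 + v * a1.
pose k := (N %/ a0)%Z.
pose rr := (N %% a0)%Z.
have rr0 : 0 <= rr by apply: modz_ge0.
have P0 : (`|rr|%N < `|a0|)%N /\ inLambda alpha ((x - (`|rr|%N)%:R) / alpha).
  split.
- rewrite /rr; lia.
- have -> : ((`|rr|%N)%:R : algC) = rr%:~R.
    by rewrite -[in RHS](gez0_abs rr0).
  have eN : (rr%:~R : algC) = u%:~R * a2%:~R + v%:~R * a1%:~R - k%:~R * a0%:~R.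
    have := congr1 (intr : int -> algC) (divz_eq N a0).
    rewrite -/k -/rr /N !rmorphD !rmorphM /= => ->; ring.
  have -> : (x - rr%:~R) / alpha = v%:~R * a2%:~R + (- k)%:~R * (a2%:~R * alpha + a1%:~R).
    rewrite eN hx' e0 rmorphN /=; field; exact: anz.
  exact: (in_lambda _ _ _ _ _ _ anz hr).
exists `|rr|%N; split => // d' [hd' hl'].
symmetry; exact: (uniq _ _ P0.1 P0.2 hd' hl').
Qed.
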